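(* Let $\{a,b\}$ be a $2$-element generating set of a finite abelian group $G$, and assume $\mathrm{Cay}(G;a,b)$ has hamiltonian paths $P$ and $P'$ satisfying either of the following two (equivalent) conditions: (1) $|\delta_b(P)-\delta_a(P')|\le 1$; or (2) $\delta_b(P)+\delta_b(P')\in\{|G|,|G|-1,|G|-2\}$. Then $\mathrm{Cay}(G;a,b)$ has two arc-disjoint hamiltonian paths.
   Context: The Cayley digraph $\mathrm{Cay}(G;a,b)$ has vertex set $G$ and an arc from $v$ to $v+s$ for all $v\in G$, $s\in\{a,b\}$; an arc $(v,v+s)$ is called an $s$-edge. For a subdigraph $P$ and $s\in\{a,b\}$, $\delta_s(P)$ denotes the number of $s$-edges in $P$. A hamiltonian path is a directed path visiting every vertex exactly once; arc-disjoint means sharing no arc. *)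

(* Defs.v *)
From mathcomp Require Import all_boot all_fingroup.
Set Implicit Arguments. Unset Strict Implicit. Unset Printing Implicit Defensive.
Local Open Scope group_scope.

Section Cayley.
Variable gT : finGroupType.

Definition cay_arc (a b : gT) : rel gT := fun u v => (v == u * a) || (v == u * b).

Definition arcs (p : seq gT) : seq (gT * gT) := zip p (behead p).

Definition ham_path (a b : gT) (p : seq gT) : bool :=
  [&& uniq p, size p == #|gT| & all (fun e => cay_arc a b e.1 e.2) (arcs p)].

Definition delta (s : gT) (p : seq gT) : nat :=
  count (fun e => e.2 == e.1 * s) (arcs p).

Definition arc_disjoint (p q : seq gT) : bool :=
  all (fun e => e \notin arcs q) (arcs p).
End Cayley.

(* Main.v *)
Require Import Defs.
From mathcomp Require Import all_boot all_fingroup.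
From mathcomp Require Import cyclic zify.
Set Implicit Arguments. Unset Strict Implicit. Unset Printing Implicit Defensive.
Local Open Scope group_scope.

Section Main.
Variable gT : finGroupType.
Variables a b : gT.
Hypothesis comm : forall x y : gT, commute x y.
Hypothesis anb : a != b.

Definition h := a * b^-1.
Definition m := #[h].
Definition H := <[h]>.

Lemma mC (x y : gT) : x * y = y * x. Proof. exact: comm. Qed.

Lemma hb : b * h = a.
Proof. by rewrite /h mC -mulgA mulVg mulg1. Qed.

Lemma hm : h ^+ m = 1. Proof. exact: expg_order. Qed.

Lemma m_gt0 : (0 < m)%N. Proof. exact: order_gt0. Qed.

Lemma h_neq1 : h != 1.
Proof. apply/eqP=> h1; move: anb; by rewrite -hb h1 mulg1 eqxx. Qed.

Lemma m_gt1 : (1 < m)%N.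
Proof.
have := m_gt0; rewrite /m leq_eqVlt => /orP[/eqP e|] //.
by move: h_neq1; rewrite -order_eq1 -e.
Qed.

Lemma hXmod t : h ^+ (t %% m) = h ^+ t. Proof. exact: expg_mod_order. Qed.

Lemma hV : h^-1 = h ^+ m.-1.
Proof.
apply: (@mulgI _ h); rewrite mulgV -expgS prednK ?hm //; exact: m_gt0.
Qed.

Lemma hXV t : (h ^+ t)^-1 = h ^+ (m.-1 * t).
Proof. by rewrite -expVgn hV expgnA. Qed.

Lemma b_eq : b = a * h ^+ m.-1.
Proof. by rewrite -hV -hb mulgK. Qed.

Definition R (x y : gT) (i : nat) := exists t, y = x * (a ^+ i * h ^+ t).

Lemma ex_k : exists i, (0 < i)%N && (a ^+ i \in H).
Proof. exists #[a]; by rewrite order_gt0 expg_order group1. Qed.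

Definition k := ex_minn ex_k.

Lemma k_spec : [/\ (0 < k)%N, a ^+ k \in H & forall i, (0 < i)%N -> a ^+ i \in H -> (k <= i)%N].
Proof.
rewrite /k; case: ex_minnP => i /andP[i0 iH] imin; split=> // j j0 jH.
by apply: imin; rewrite j0.
Qed.

Lemma k_gt0 : (0 < k)%N. Proof. by case: k_spec. Qed.

Lemma aXH i : (a ^+ i \in H) = (k %| i)%N.
Proof.
case: k_spec => k0 akH kmin.
apply/idP/idP.
- move=> Hi; rewrite /dvdn; apply/negPn/negP => r0.
  have r_lt : (i %% k < k)%N by rewrite ltn_pmod.
  have : a ^+ (i %% k) \in H.
    have e : a ^+ i = a ^+ (i %/ k * k) * a ^+ (i %% k) by rewrite -expgnDr -divn_eq.
    have e2 : a ^+ (i %% k) = (a ^+ (i %/ k * k))^-1 * a ^+ i by rewrite e mulKg.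
    by rewrite e2 groupM // groupV mulnC expgnA groupX.
  move/(kmin _ _); rewrite lt0n r0 => /(_ isT). by rewrite leqNgt r_lt.
- by case/dvdnP=> q ->; rewrite mulnC expgnA groupX.
Qed.

Lemma hX_in_H t : h ^+ t \in H. Proof. exact: mem_cycle. Qed.

Lemma R_refl x : R x x 0.
Proof. by exists 0%N; rewrite !expg0 !mulg1. Qed.

Lemma R_trans x y z i j : R x y i -> R y z j -> R x z (i + j).
Proof.
case=> t -> [u ->]; exists (t + u)%N.
rewrite !expgnDr -!mulgA; congr (x * _); congr (a ^+ i * _).
by rewrite mulgA (mC (h ^+ t)) -!mulgA.
Qed.

Lemma R_a x : R x (x * a) 1.
Proof. by exists 0%N; rewrite expg1 expg0 mulg1. Qed.

Lemma R_b x : R x (x * b) 1.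
Proof. by exists m.-1; rewrite expg1 -b_eq. Qed.

Lemma R_h x t : R x (x * h ^+ t) 0.
Proof. by exists t; rewrite expg0 mul1g. Qed.

Lemma R_mul x y g i : R x y i -> R (g * x) (g * y) i.
Proof. by case=> t ->; exists t; rewrite mulgA. Qed.

Lemma aH i j : i = j %[mod k] -> exists v, a ^+ i = a ^+ j * h ^+ v.
Proof.
move=> e.
have sub_case : forall i j, (j <= i)%N -> i = j %[mod k] -> exists v, a ^+ i = a ^+ j * h ^+ v.
  move=> i' j' le e'.
  have : a ^+ (i' - j') \in H by rewrite aXH -eqn_mod_dvd // e'.
  case/cycleP=> v ev; exists v; by rewrite -ev -expgnDr subnKC.
case: (leqP j i) => [le|lt]; first exact: sub_case.
have [v ev] := sub_case j i (ltnW lt) (esym e).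
exists (m.-1 * v)%N; by rewrite ev -hXV mulgK.
Qed.

Lemma R_congr x y i j : R x y i -> i = j %[mod k] -> R x y j.
Proof.
case=> t -> /aH [v ->]; exists (v + t)%N.
by rewrite expgnDr !mulgA.
Qed.

Lemma R_uniq x y i j : R x y i -> R x y j -> i = j %[mod k].
Proof.
have key : forall i j t u, (i <= j)%N -> a ^+ i * h ^+ t = a ^+ j * h ^+ u -> i = j %[mod k].
  move=> i' j' t u le e.
  apply/eqP; rewrite eq_sym eqn_mod_dvd // -aXH.
  have e2 : a ^+ (j' - i') = h ^+ t * (h ^+ u)^-1.
    apply: (@mulgI _ (a ^+ i')).
    by rewrite -expgnDr subnKC // mulgA e mulgK.
  by rewrite e2 groupM ?groupV ?hX_in_H.
case=> t -> [u /mulgI e].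
case: (leqP i j) => le; first exact: (key _ _ _ _ le e).
by apply: esym; apply: (key _ _ _ _ (ltnW le) (esym e)).
Qed.


Local Notation n := #|gT|.
Definition NN := #|gT|.
Ltac fixN := rewrite -/NN in *.
Definition pn (P : seq gT) j := nth 1 P j.

Lemma arcsE (s : seq gT) :
  arcs s = [seq (pn s j, pn s j.+1) | j <- iota 0 (size s).-1].
Proof.
elim: s => [|x s IH] //=.
case: s IH => [|y s] IH //=.
rewrite /arcs /= in IH *.
rewrite IH -(addn0 1%N) iotaDl -map_comp.
congr (_ :: _); apply: eq_map => j //=.
Qed.

Lemma n_gt0 : (0 < n)%N.
Proof. by apply/card_gt0P; exists 1. Qed.

Lemma ham_prop P : ham_path a b P ->
  [/\ uniq P, size P = n &
      forall j, (j.+1 < n)%N -> pn P j.+1 = pn P j * a \/ pn P j.+1 = pn P j * b].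
Proof.
case/and3P=> u /eqP s al; split=> // j lt.
move/allP: al => /(_ (pn P j, pn P j.+1)).
rewrite arcsE s; case/(_ _)/Wrap.
  apply/mapP; exists j => //; rewrite mem_iota add0n.
  have := n_gt0; lia.
rewrite /cay_arc /= => /orP[] /eqP ->; by [left | right].
Qed.

Lemma ham_build P : uniq P -> size P = n ->
  (forall j, (j.+1 < n)%N -> cay_arc a b (pn P j) (pn P j.+1)) -> ham_path a b P.
Proof.
move=> u s al; rewrite /ham_path u s eqxx /=.
apply/allP => e; rewrite arcsE s => /mapP[j]; rewrite mem_iota add0n => lt ->.
apply: al; have := n_gt0; lia.
Qed.

Lemma card_count P (p : pred gT) : uniq P -> size P = n -> (forall x, x \in P) ->
  #|[pred x | p x]| = count p P.
Proof.
move=> u s memP.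
rewrite -size_filter -(card_uniqP (filter_uniq p u)).
apply: eq_card => x; by rewrite !inE mem_filter memP andbT.
Qed.

Lemma memP P : ham_path a b P -> forall x, x \in P.
Proof.
case/ham_prop=> u s _.
have /subset_cardP : #|P| = #|gT| by rewrite (card_uniqP u) s.
by move/(_ (subset_predT _)) => e x; rewrite e.
Qed.


Definition wP (P : seq gT) := pn P n.-1.
Definition nxt (P : seq gT) x := pn P (index x P).+1.
Definition stepb (P : seq gT) x := nxt P x == x * b.

Section Path.
Variable P : seq gT.
Hypothesis hP : ham_path a b P.

Lemma uP : uniq P. Proof. by case: (ham_prop hP). Qed.
Lemma sP : size P = n. Proof. by case: (ham_prop hP). Qed.
Lemma idx_lt x : (index x P < n)%N. Proof. by rewrite -sP index_mem memP. Qed.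
Lemma pn_idx x : pn P (index x P) = x. Proof. exact: nth_index (memP hP x). Qed.
Lemma idx_pn j : (j < n)%N -> index (pn P j) P = j.
Proof. by move=> lt; rewrite /pn index_uniq ?sP // uP. Qed.

Lemma neq_w x : (x != wP P) = (index x P < n.-1)%N.
Proof.
rewrite /wP -{1}(pn_idx x) /pn nth_uniq ?sP ?uP ?idx_lt //.
  move: (idx_lt x) n_gt0; set i := index x P => ? ?; apply/idP/idP; lia.
have := n_gt0; lia.
Qed.

Lemma nxt_step x : x != wP P -> nxt P x = x * (if stepb P x then b else a).
Proof.
rewrite neq_w => lt.
have [_ _ st] := ham_prop hP.
have lt' : ((index x P).+1 < n)%N by have := n_gt0; lia.
rewrite /stepb /nxt.
case: (st _ lt') => ->; rewrite pn_idx.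
  by rewrite (inj_eq (mulgI x)) (negbTE anb).
by rewrite eqxx.
Qed.

Lemma nxt_inj (x y : gT) : x != wP P -> y != wP P -> nxt P x = nxt P y -> x = y.
Proof.
rewrite !neq_w /nxt /pn => lx ly /eqP.
have n0 := n_gt0.
have hx : ((index x P).+1 < size P)%N by rewrite sP; move: lx; set i := index x P; lia.
have hy : ((index y P).+1 < size P)%N by rewrite sP; move: ly; set i := index y P; lia.
rewrite (nth_uniq _ hx hy uP).
move/eqP=> [e]; by rewrite -(pn_idx x) -(pn_idx y) e.
Qed.

Lemma stepb_shift x : x != wP P -> x * h != wP P -> ~~ stepb P x -> ~~ stepb P (x * h).
Proof.
move=> xw xhw sx; apply/negP => sxh.
have e1 := nxt_step xw; rewrite (negbTE sx) in e1.
have e2 := nxt_step xhw; rewrite sxh in e2.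
have : nxt P x = nxt P (x * h) by rewrite e1 e2 -mulgA (mC h b) hb.
move/(nxt_inj xw xhw) => e.
have : x * 1 = x * h by rewrite mulg1 -e.
move/mulgI => e'; move: h_neq1; by rewrite -e' eqxx.
Qed.

Definition kap x := (index x P %% k)%N.

Lemma R_pn j : (j < n)%N -> R (pn P 0) (pn P j) j.
Proof.
have [_ _ st] := ham_prop hP.
elim: j => [|j IH] lt; first exact: R_refl.
have Rj : R (pn P j) (pn P j.+1) 1 by case: (st j lt) => ->; [exact: R_a | exact: R_b].
by have := R_trans (IH (ltnW lt)) Rj; rewrite addn1.
Qed.

Lemma kapP x i : R (pn P 0) x i <-> kap x = (i %% k)%N.
Proof.
have Rx := R_pn (idx_lt x); rewrite pn_idx in Rx.
split=> [Ri|e]; first exact: (R_uniq Rx Ri).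
exact: R_congr Rx e.
Qed.

Lemma kap_lt x : (kap x < k)%N. Proof. by rewrite ltn_pmod // k_gt0. Qed.

Lemma kap_R x y i : R x y i -> kap y = ((kap x + i) %% k)%N.
Proof.
move=> Rxy.
have Rx : R (pn P 0) x (kap x) by apply/kapP; rewrite modn_mod.
by apply/kapP; apply: R_trans Rx Rxy.
Qed.

Lemma kap_a x : kap (x * a) = ((kap x).+1 %% k)%N.
Proof. by rewrite (kap_R (R_a x)) addn1. Qed.
Lemma kap_b x : kap (x * b) = ((kap x).+1 %% k)%N.
Proof. by rewrite (kap_R (R_b x)) addn1. Qed.
Lemma kap_h x t : kap (x * h ^+ t) = kap x.
Proof. by rewrite (kap_R (R_h x t)) addn0 modn_small // kap_lt. Qed.
Lemma kap_pn j : (j < n)%N -> kap (pn P j) = (j %% k)%N.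
Proof. by move=> lt; rewrite /kap idx_pn. Qed.

Lemma kap_eq x y : kap x = kap y -> exists2 t, (t < m)%N & y = x * h ^+ t.
Proof.
move=> e.
have [t ex] : R (pn P 0) x (kap x) by apply/kapP; rewrite modn_mod.
have [u ey] : R (pn P 0) y (kap x) by apply/kapP; rewrite -e modn_mod.
exists ((m.-1 * t + u) %% m)%N; first by rewrite ltn_pmod // m_gt0.
rewrite hXmod expgnDr -hXV ey [in RHS]ex -!mulgA; congr (_ * (_ * _)).
by rewrite mulKVg.
Qed.

Lemma card_kap i : (i < k)%N -> #|[pred x | kap x == i]| = m.
Proof.
move=> lt.
rewrite (eq_card (B := (pn P 0 * a ^+ i) *: H)) ?card_lcoset //.
move=> x; rewrite inE mem_lcoset; apply/eqP/cycleP => [ki | [t et]].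
  have : R (pn P 0) x i by apply/kapP; rewrite modn_small.
  case=> t ->; exists t; by rewrite (mulgA (pn P 0)) mulKg.
have : R (pn P 0) x i.
  exists t; by rewrite -et mulgA mulKVg.
by move/kapP; rewrite modn_small.
Qed.

Lemma n_km : n = (k * m)%N.
Proof.
rewrite -sum1_card (partition_big (fun x => Ordinal (kap_lt x)) xpredT) //=.
rewrite (eq_bigr (fun _ => m)); first by rewrite sum_nat_const card_ord.
move=> j _; rewrite -(card_kap (ltn_ord j)) -sum1_card.
apply: eq_bigl => x; by rewrite inE -val_eqE.
Qed.

Lemma k_le_n : (k <= n)%N.
Proof. by rewrite n_km leq_pmulr // m_gt0. Qed.

Lemma kap_w : kap (wP P) = k.-1.
Proof.
have k0 := k_gt0; have m0 := m_gt0.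
rewrite /wP kap_pn; last by rewrite n_km; nia.
have -> : (n.-1 = k.-1 + m.-1 * k)%N by rewrite n_km; nia.
by rewrite addnC modnMDl modn_small //; lia.
Qed.

Lemma kap_neq_w x : kap x != k.-1 -> x != wP P.
Proof. by apply: contra => /eqP ->; rewrite kap_w. Qed.

Lemma unifA z : kap z != k.-1 -> ~~ stepb P z -> forall t, ~~ stepb P (z * h ^+ t).
Proof.
move=> kz sz; elim=> [|t IH]; first by rewrite expg0 mulg1.
rewrite expgSr mulgA; apply: stepb_shift => //; apply: kap_neq_w.
  by rewrite kap_h.
by rewrite -mulgA -expgSr kap_h.
Qed.

Lemma unif0 z t : kap z != k.-1 -> stepb P (z * h ^+ t) = stepb P z.
Proof.
move=> kz; case sz: (stepb P z); last by apply/negbTE/unifA; rewrite ?sz.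
apply/negPn/negP => nst.
have := unifA (z := z * h ^+ t) _ nst (m.-1 * t).
rewrite -mulgA -hXV mulgV mulg1 sz => /(_ _)/Wrap []//.
by rewrite kap_h.
Qed.

Definition sig i := stepb P (pn P i).

Lemma unif x : (kap x < k.-1)%N -> stepb P x = sig (kap x).
Proof.
move=> lt.
have kk : kap (pn P (kap x)) = kap x.
  rewrite kap_pn ?modn_small ?kap_lt //.
  by apply: leq_trans (kap_lt x) k_le_n.
have [t _ ex] := kap_eq kk.
rewrite [in LHS]ex unif0 // kk; by rewrite neq_ltn lt.
Qed.

Lemma hX_neq1 t : (0 < t < m)%N -> h ^+ t != 1.
Proof.
case/andP=> t0 tm; rewrite -order_dvdn; apply/negP => /(dvdn_leq t0).
by rewrite leqNgt tm.
Qed.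

Lemma wh_neq t : (0 < t < m)%N -> wP P * h ^+ t != wP P.
Proof.
move/hX_neq1; apply: contra => /eqP e.
apply/eqP; apply: (@mulgI _ (wP P)); by rewrite mulg1.
Qed.

Lemma term_step t : (0 < t)%N -> (t.+1 < m)%N ->
  ~~ stepb P (wP P * h ^+ t) -> ~~ stepb P (wP P * h ^+ t.+1).
Proof.
move=> t0 tm.
rewrite expgSr mulgA; apply: stepb_shift.
  apply: wh_neq; lia.
rewrite -mulgA -expgSr; apply: wh_neq; lia.
Qed.

End Path.

Lemma count_mono (f : nat -> bool) s l :
  (forall t d, (s <= t)%N -> (t + d < s + l)%N -> ~~ f t -> ~~ f (t + d)) ->
  forall t, (s <= t < s + l)%N -> f t = (t < s + count f (iota s l))%N.
Proof.
elim: l s => [|l IH] s mono t /andP[st tl]; first lia.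
rewrite /=.
case fs: (f s).
  have [->|ne] := eqVneq t s; first by rewrite fs; lia.
  rewrite (IH s.+1); [lia| |lia].
  move=> t' d st' lt; apply: mono; lia.
have -> : count f (iota s.+1 l) = 0%N.
  rewrite (eq_in_count (a2 := pred0)) ?count_pred0 // => i.
  rewrite mem_iota => /andP[si il] /=.
  have := mono s (i - s)%N (leqnn _) _ _; rewrite subnKC; last lia.
  by move=> /(_ _ _)/Wrap[]; [lia | rewrite fs | move/negbTE].
rewrite /= !addn0 ltnNge st /=.
have := mono s (t - s)%N (leqnn _) _ _; rewrite subnKC //.
by move=> /(_ _ _)/Wrap[]; [lia | rewrite fs | move/negbTE].
Qed.


Lemma sum_split (F : nat -> nat) : \sum_(i < k) F i = (\sum_(i < k.-1) F i + F k.-1)%N.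
Proof. move: k_gt0; case: k => // k' _. by rewrite big_ord_recr. Qed.

Section Path2.
Variable P : seq gT.
Hypothesis hP : ham_path a b P.

Definition pT := count (fun t => stepb P (wP P * h ^+ t)) (iota 1 m.-1).

Lemma pT_le : (pT <= m.-1)%N.
Proof. by rewrite /pT (leq_trans (count_size _ _)) // size_iota. Qed.

Lemma pattern t : (0 < t < m)%N -> stepb P (wP P * h ^+ t) = (t <= pT)%N.
Proof.
move=> tm.
have m1 := m_gt1.
have := @count_mono (fun t => stepb P (wP P * h ^+ t)) 1 m.-1 _ t _.
- rewrite -/pT add1n ltnS; apply.
- move=> t' d t1; elim: d => [|d IH] lt s; first by rewrite addn0.
  rewrite addnS; apply: (term_step hP); [lia | lia | apply: IH => //; lia].
- lia.
Qed.

Lemma deltaE : delta b P = count (fun j => stepb P (pn P j)) (iota 0 n.-1).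
Proof.
rewrite /delta arcsE (sP hP) count_map; apply: eq_in_count => j.
rewrite mem_iota add0n => lt /=.
by rewrite /stepb /nxt (idx_pn hP) //; have := n_gt0; lia.
Qed.

Lemma deltaaE : delta a P = count (fun j => ~~ stepb P (pn P j)) (iota 0 n.-1).
Proof.
rewrite /delta arcsE (sP hP) count_map; apply: eq_in_count => j.
rewrite mem_iota add0n => lt.
change ((pn P j.+1 == pn P j * a) = ~~ stepb P (pn P j)).
have lt' : (j < n)%N by have := n_gt0; lia.
have xw : pn P j != wP P by rewrite (neq_w hP) (idx_pn hP).
have := nxt_step hP xw; rewrite /nxt (idx_pn hP) // => ->.
case: (stepb P (pn P j)) => /=; last by rewrite eqxx.
by rewrite (inj_eq (mulgI _)) eq_sym (negbTE anb).
Qed.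

Lemma delta_sum : (delta a P + delta b P)%N = n.-1.
Proof.
rewrite deltaaE deltaE addnC.
apply: etrans (etrans (count_predC (fun j => stepb P (pn P j)) (iota 0 n.-1)) (size_iota _ _)).
done.
Qed.

Lemma deltaV : delta b P = #|[pred x | (x != wP P) && stepb P x]|.
Proof.
rewrite (card_count _ (uP hP) (sP hP) (memP hP)) deltaE.
have n0 := n_gt0.
rewrite [X in _ = count _ X](_ : P = mkseq (pn P) n); last by rewrite -(sP hP) mkseq_nth.
rewrite /mkseq count_map.
have -> : iota 0 n = iota 0 n.-1 ++ [:: n.-1].
  by rewrite -{1}(prednK n0) -addn1 iotaD.
rewrite count_cat /= -/(wP P) eqxx /= addn0.
rewrite addn0; apply: eq_in_count => j; rewrite mem_iota add0n => lt /=.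
case/andP: lt => _ lt; rewrite (neq_w hP) (idx_pn hP) ?lt //; move: lt n0; rewrite -/NN; lia.
Qed.

Lemma card_split (p : pred gT) :
  #|[pred x | p x]| = \sum_(i < k) #|[pred x | (kap P x == i) && p x]|.
Proof.
rewrite -sum1_card (partition_big (fun x => Ordinal (kap_lt P x)) xpredT) //=.
apply: eq_bigr => j _; rewrite -sum1_card; apply: eq_bigl => x.
by rewrite !inE -val_eqE /= andbC.
Qed.

Definition beta := \sum_(i < k.-1) sig P i.

Lemma beta_le : (beta <= k.-1)%N.
Proof.
rewrite /beta -[X in (_ <= X)%N]card_ord -sum1_card.
by apply: leq_sum => i _; case: (sig P i).
Qed.

Lemma last_class :
  #|[pred x | (kap P x == k.-1) && ((x != wP P) && stepb P x)]| = pT.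
Proof.
set sq := [seq wP P * h ^+ t | t <- [seq t <- iota 1 m.-1 | stepb P (wP P * h ^+ t)]].
have m1 := m_gt1.
have usq : uniq sq.
  rewrite map_inj_in_uniq ?filter_uniq ?iota_uniq // => t u.
  rewrite !mem_filter !mem_iota => /andP[_ /andP[_ tm]] /andP[_ /andP[_ um]] /mulgI /eqP.
  rewrite eq_expg_mod_order -/m !modn_small; [by move/eqP | lia | lia].
have -> : pT = size sq by rewrite size_map size_filter.
rewrite -(card_uniqP usq); apply: eq_card => x; rewrite !inE.
apply/idP/idP.
- case/andP=> /eqP kx /andP[xw sx].
  have [t tm ex] := kap_eq hP (x := wP P) (y := x) (etrans (kap_w hP) (esym kx)).
  apply/mapP; exists t => //; rewrite mem_filter -ex sx mem_iota /=.
  have t0 : t != 0%N.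
    by apply: contraNneq xw => t0; rewrite ex t0 expg0 mulg1.
  lia.
- case/mapP=> t; rewrite mem_filter mem_iota => /andP[st /andP[t1 tm]] ->.
  rewrite (kap_h hP) (kap_w hP) eqxx st wh_neq //; lia.
Qed.

Lemma delta_formula : delta b P = (m * beta + pT)%N.
Proof.
rewrite deltaV card_split.
rewrite (sum_split (fun i => #|[pred x | (kap P x == i) && ((x != wP P) && stepb P x)]|)).
rewrite last_class.
congr (_ + _)%N.
rewrite /beta big_distrr /=.
apply: eq_bigr => i _.
have ik := ltn_ord i.
case sg: (sig P i).
- rewrite muln1 -(card_kap hP (i := i)); last by have := k_gt0; lia.
  apply: eq_card => x; rewrite !inE; case kx: (kap P x == i) => //=.
  move/eqP: kx => kx.
  rewrite (kap_neq_w hP) ?kx ?(unif hP) ?kx //; lia.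
- rewrite muln0; apply: eq_card0 => x; rewrite !inE.
  apply/negbTE/negP => /andP[/eqP kx /andP[_ st]]; move: st.
  by rewrite (unif hP) kx ?sg.
Qed.

End Path2.


Lemma step_shift (s u : bool) :
  (if s then b else a) * h ^+ (s + m - u)%N = (if u then b else a).
Proof.
have m1 := m_gt1.
case: s; case: u => /=.
- by rewrite add1n subn1 /= hm mulg1.
- by rewrite add1n subn0 expgS mulgA hb hm mulg1.
- by rewrite add0n subn1 -b_eq.
- by rewrite add0n subn0 hm mulg1.
Qed.

Lemma cay_arc_s x (c : bool) : cay_arc a b x (x * (if c then b else a)).
Proof. by rewrite /cay_arc; case: c; rewrite eqxx ?orbT. Qed.

Lemma ifab_b (c : bool) : ((if c then b else a) == b) = c.
Proof. by case: c; rewrite ?eqxx // (negbTE anb). Qed.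

Section Realign.
Variable P : seq gT.
Hypothesis hP : ham_path a b P.
Variable tg : nat -> bool.
Variable g : gT.
Hypothesis tcount : \sum_(i < k.-1) tg i = beta P.

Definition cs i := \sum_(l < i) sig P l.
Definition ct i := \sum_(l < i) tg l.
Definition ee i := (cs i + m * i - ct i)%N.
Definition phi x := g * x * h ^+ (ee (kap P x)).

Lemma ct_le i : (ct i <= i)%N.
Proof.
rewrite /ct -[X in (_ <= X)%N]card_ord -sum1_card.
by apply: leq_sum => l _; case: (tg l).
Qed.

Lemma ee_succ i : ee i.+1 = (ee i + (sig P i + m - tg i))%N.
Proof.
have cS : cs i.+1 = (cs i + sig P i)%N by rewrite /cs big_ord_recr.
have tS : ct i.+1 = (ct i + tg i)%N by rewrite /ct big_ord_recr.
rewrite /ee cS tS mulnS.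
have := ct_le i; have m1 := m_gt1.
have : (i <= m * i)%N by rewrite leq_pmull // ltnW.
case: (sig P i); case: (tg i) => /=; lia.
Qed.

Lemma ee0 : ee 0 = 0%N.
Proof. by rewrite /ee /cs /ct !big_ord0 muln0. Qed.

Lemma hee_last : h ^+ (ee k.-1) = 1.
Proof.
have -> : ee k.-1 = (m * k.-1)%N by rewrite /ee /ct tcount /cs -/(beta P) addnC addnK.
by rewrite expgnA hm expg1n.
Qed.

Lemma phi_inj : injective phi.
Proof.
move=> x y; rewrite /phi -!mulgA => /mulgI e1.
have ey : y = x * h ^+ (ee (kap P x) + m.-1 * ee (kap P y)).
  by rewrite expgnDr -hXV mulgA e1 mulgK.
have kk : kap P y = kap P x by rewrite ey (kap_h hP).
by move: e1; rewrite kk => /mulIg.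
Qed.

Lemma phi_step (x : gT) : x != wP P ->
  phi (nxt P x) = phi x * (if (kap P x < k.-1)%N then (if tg (kap P x) then b else a)
                           else (if stepb P x then b else a)).
Proof.
move=> xw; rewrite (nxt_step hP xw).
have kn : kap P (x * (if stepb P x then b else a)) = ((kap P x).+1 %% k)%N.
  by case: (stepb P x); rewrite ?(kap_a hP) ?(kap_b hP).
have kl := kap_lt P x.
rewrite /phi kn.
case lt: (kap P x < k.-1)%N.
- rewrite modn_small; last lia.
  rewrite (unif hP) // ee_succ expgnDr.
  rewrite -[in RHS](step_shift (sig P (kap P x)) (tg (kap P x))) !mulgA.
  congr (_ * _); rewrite -!mulgA; congr (_ * (_ * _)); exact: mC.
- have -> : (kap P x).+1 = k by have := k_gt0; lia.
  have -> : kap P x = k.-1 by have := k_gt0; lia.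
  by rewrite modnn ee0 expg0 hee_last !mulg1 mulgA.
Qed.

Definition Qp := map phi P.

Lemma Qp_pn j : (j < n)%N -> pn Qp j = phi (pn P j).
Proof. by move=> lt; rewrite /pn /Qp (nth_map 1) // (sP hP). Qed.

Lemma ham_Q : ham_path a b Qp.
Proof.
apply: ham_build.
- by rewrite map_inj_uniq ?(uP hP) //; exact: phi_inj.
- by rewrite size_map (sP hP).
move=> j lt.
have xw : pn P j != wP P by rewrite (neq_w hP) (idx_pn hP); move: lt; rewrite -/NN; lia.
have e1 : pn P j.+1 = nxt P (pn P j) by rewrite /nxt (idx_pn hP) //; lia.
rewrite !Qp_pn; try lia.
rewrite e1 phi_step //; case: ifP => _; exact: cay_arc_s.
Qed.

Lemma wQ : wP Qp = g * wP P.
Proof.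
have n0 := n_gt0.
rewrite /wP Qp_pn; last lia.
by rewrite /phi -/(wP P) (kap_w hP) hee_last mulg1.
Qed.

Lemma stepQ (x : gT) : x != wP P ->
  stepb Qp (phi x) = (if (kap P x < k.-1)%N then tg (kap P x) else stepb P x).
Proof.
move=> xw.
have il : ((index x P).+1 < n)%N by move: xw; rewrite (neq_w hP); set i := index x P; move: n_gt0; rewrite -/NN; lia.
rewrite /stepb {1}/nxt /Qp index_map; last exact: phi_inj.
rewrite -/Qp Qp_pn // -/(nxt P x) phi_step // (inj_eq (mulgI _)).
by case: ifP => _; rewrite ifab_b.
Qed.

End Realign.


Lemma arc_disj P Q : ham_path a b P -> ham_path a b Q ->
  (forall u : gT, u != wP P -> u != wP Q -> stepb P u != stepb Q u) ->
  arc_disjoint P Q.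
Proof.
move=> hP hQ H0.
have n0 := n_gt0.
apply/allP => [[x y]]; rewrite arcsE (sP hP) => /mapP[j]; rewrite mem_iota add0n => /andP[_ lt] [-> ->].
apply/negP; rewrite arcsE (sP hQ) => /mapP[j']; rewrite mem_iota add0n => /andP[_ lt'] E.
have e1 : pn P j = pn Q j' := congr1 fst E.
have e2 : pn P j.+1 = pn Q j'.+1 := congr1 snd E.
have jn : (j < n)%N by move: lt; rewrite -/NN; lia.
have jn' : (j' < n)%N by move: lt'; rewrite -/NN; lia.
have xw : pn P j != wP P by rewrite (neq_w hP) (idx_pn hP).
have xw' : pn P j != wP Q by rewrite e1 (neq_w hQ) (idx_pn hQ).
move: (H0 _ xw xw'); rewrite /stepb /nxt (idx_pn hP) // e1 (idx_pn hQ) // -e1 -e2.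
by rewrite eqxx.
Qed.

Lemma construct P P' (hP : ham_path a b P) (hP' : ham_path a b P') (tg : nat -> bool) (g : gT) :
  \sum_(i < k.-1) tg i = beta P' ->
  (forall x : gT, x != wP P' -> phi P' tg g x != wP P ->
     stepb P (phi P' tg g x) != (if (kap P' x < k.-1)%N then tg (kap P' x) else stepb P' x)) ->
  exists Q Q' : seq gT, [/\ ham_path a b Q, ham_path a b Q' & arc_disjoint Q Q'].
Proof.
move=> tc H0.
have hQ := ham_Q hP' g tc.
exists P, (Qp P' tg g); split => //.
apply: arc_disj => // u uw uw'.
have : u \in Qp P' tg g by apply: memP.
case/mapP => x _ ex.
have xw : x != wP P'.
  apply: contraNneq uw' => exw.
  by rewrite (wQ hP' g tc) ex exw /phi (kap_w hP') (hee_last tc) mulg1.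
rewrite ex (stepQ hP' g tc xw); rewrite ex in uw.
exact: H0.
Qed.

Lemma term_info P (hP : ham_path a b P) (u : gT) : kap P u = k.-1 -> u != wP P ->
  exists s, [/\ (0 < s < m)%N, u = wP P * h ^+ s & stepb P u = (s <= pT P)%N].
Proof.
move=> ku uw.
have [s sm es] := kap_eq hP (x := wP P) (y := u) (etrans (kap_w hP) (esym ku)).
have s0 : s != 0%N by apply: contraNneq uw => s0; rewrite es s0 expg0 mulg1.
have ss : (0 < s < m)%N by lia.
by exists s; split => //; rewrite es pattern.
Qed.

Lemma sum_neg K (f : nat -> bool) : \sum_(i < K) ~~ f i = (K - \sum_(i < K) f i)%N.
Proof.
have : (\sum_(i < K) ~~ f i + \sum_(i < K) f i)%N = K.
  rewrite -big_split /= (eq_bigr (fun _ => 1%N)) ?sum1_card ?card_ord // => i _.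
  by case: (f i).
lia.
Qed.

Lemma sum_rot (F : nat -> nat) o : \sum_(i < k) F ((i + o) %% k)%N = \sum_(i < k) F i.
Proof.
have hk : forall i : 'I_k, ((i + o) %% k < k)%N by move=> i; rewrite ltn_pmod // k_gt0.
symmetry; rewrite (reindex_inj (h := fun i : 'I_k => Ordinal (hk i))) //=.
move=> i j /(congr1 val) /= /eqP; rewrite eqn_modDr !modn_small // => /eqP e.
exact: val_inj.
Qed.

Lemma kphi_gen P P' (hP : ham_path a b P) (hP' : ham_path a b P') (tg : nat -> bool) (g x : gT) :
  kap P (phi P' tg g x) = (kap P (g * pn P' 0) + kap P' x) %% k.
Proof.
rewrite /phi (kap_h hP).
have : R (pn P' 0) x (kap P' x) by apply/(kapP hP'); rewrite modn_mod.
by move/(R_mul g)/(kap_R hP).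
Qed.

Lemma caseD P P' (hP : ham_path a b P) (hP' : ham_path a b P') (cD : bool) j0 :
  pT P = (if cD then m.-1 else 0%N) -> pT P' = (if cD then m.-1 else 0%N) ->
  (j0 < k.-1)%N -> sig P j0 = ~~ cD ->
  (beta P' + cD = k.-1 - beta P + ~~ cD)%N ->
  exists Q Q' : seq gT, [/\ ham_path a b Q, ham_path a b Q' & arc_disjoint Q Q'].
Proof.
move=> pP pP' j0k sj0 bb.
have k0 := k_gt0.
have m1 := m_gt1.
set g := pn P j0.+1 * (pn P' 0)^-1.
set sh := fun r => if (r < k.-1)%N then sig P r else cD.
set tg := fun i => ~~ sh ((i + j0.+1) %% k)%N.
have kj : kap P (g * pn P' 0) = j0.+1.
  rewrite /g mulgKV (kap_pn hP) ?modn_small //; last first.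
    by apply: leq_trans (k_le_n hP); lia.
  lia.
have kphi : forall x, kap P (phi P' tg g x) = ((j0.+1 + kap P' x) %% k)%N.
  by move=> x; rewrite (kphi_gen hP hP') kj.
have termD : forall Q (hQ : ham_path a b Q) u, pT Q = (if cD then m.-1 else 0%N) ->
    kap Q u = k.-1 -> u != wP Q -> stepb Q u = cD.
  move=> Q hQ u pQ ku uw.
  have [s [ss _ ->]] := term_info hQ ku uw.
  rewrite pQ; destruct cD => /=; lia.
have jk : ((k.-1 + j0.+1) %% k)%N = j0.
  have -> : (k.-1 + j0.+1 = j0 + k)%N by lia.
  by rewrite modnDr modn_small //; lia.
apply: (construct hP hP' (tg := tg) (g := g)).
- have e1 := sum_split (fun i => nat_of_bool (tg i)).
  have e2 : \sum_(i < k) tg i = \sum_(i < k) ~~ sh i.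
    exact: (sum_rot (fun r => nat_of_bool (~~ sh r)) j0.+1).
  have e3 := sum_split (fun i => nat_of_bool (~~ sh i)).
  have e4 : \sum_(i < k.-1) ~~ sh i = \sum_(i < k.-1) ~~ sig P i.
    by apply: eq_bigr => i _; rewrite /sh ltn_ord.
  rewrite e4 (sum_neg k.-1) -/(beta P) in e3.
  have e5 : tg k.-1 = cD by rewrite /tg jk /sh j0k sj0 negbK.
  have e6 : sh k.-1 = cD by rewrite /sh ltnn.
  rewrite e5 e2 e3 e6 in e1.
  have := beta_le P; move: e1 bb; generalize (\sum_(i < k.-1) tg i) => T.
  destruct cD => /=; lia.
- move=> x xw phw.
  case: ifP => kx.
  + rewrite /tg addnC -kphi.
    have -> : stepb P (phi P' tg g x) = sh (kap P (phi P' tg g x)).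
      rewrite /sh; case: ifP => lt; first exact: unif.
      apply: (termD P hP _ pP) => //.
      have := kap_lt P (phi P' tg g x); lia.
    by case: (sh _).
  + have kx' : kap P' x = k.-1 by have := kap_lt P' x; lia.
    rewrite (termD P' hP' x pP' kx' xw) (unif hP) kphi kx' addnC jk //.
    by rewrite sj0; destruct cD.
Qed.

Lemma mod2 x : (x < 2 * m)%N -> (x %% m = if (x < m)%N then x else x - m)%N.
Proof.
move=> lt; case: ifP => xm; first by rewrite modn_small.
have -> : x = ((x - m) + m)%N by lia.
rewrite modnDr modn_small; lia.
Qed.

Lemma caseS P P' (hP : ham_path a b P) (hP' : ham_path a b P') r :
  (r < m)%N -> beta P' = (k.-1 - beta P)%N ->
  (forall s, (0 < s < m)%N -> ((r + s) %% m != 0)%N ->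
     (((r + s) %% m <= pT P)%N != (s <= pT P')%N)) ->
  exists Q Q' : seq gT, [/\ ham_path a b Q, ham_path a b Q' & arc_disjoint Q Q'].
Proof.
move=> rm bb ar.
have k0 := k_gt0.
have m1 := m_gt1.
set g := wP P * h ^+ r * (wP P')^-1.
set tg := fun i => ~~ sig P i.
have tc : \sum_(i < k.-1) tg i = beta P' by rewrite sum_neg bb.
have phw' : phi P' tg g (wP P') = wP P * h ^+ r.
  by rewrite /phi (kap_w hP') (hee_last tc) mulg1 /g mulgKV.
have kphi : forall x, kap P (phi P' tg g x) = kap P' x.
  have o0 : kap P (g * pn P' 0) = 0%N.
    have := kphi_gen hP hP' tg g (wP P'); rewrite phw' (kap_h hP) (kap_w hP) (kap_w hP').
    have := kap_lt P (g * pn P' 0).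
    case: (kap P (g * pn P' 0)) => // o ol.
    have -> : (o.+1 + k.-1 = o + k)%N by lia.
    rewrite modnDr modn_small; lia.
  by move=> x; rewrite (kphi_gen hP hP') o0 add0n modn_small // kap_lt.
apply: (construct hP hP' (tg := tg) (g := g)) => // x xw phw.
case: ifP => kx.
- by rewrite (unif hP) kphi // /tg; case: (sig P _).
- have kx' : kap P' x = k.-1 by have := kap_lt P' x; lia.
  have [s [ss ex ->]] := term_info hP' kx' xw.
  have ephi : phi P' tg g x = wP P * h ^+ ((r + s) %% m).
    rewrite /phi kx' (hee_last tc) mulg1 ex /g hXmod expgnDr.
    by rewrite mulgA mulgKV mulgA.
  have rs0 : ((r + s) %% m != 0)%N.
    by apply: contraNneq phw => e0; rewrite ephi e0 expg0 mulg1.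
  have rsm : (0 < (r + s) %% m < m)%N by rewrite lt0n rs0 ltn_pmod // m_gt0.
  rewrite ephi (pattern hP) //.
  exact: ar.
Qed.


Lemma neq_bool (x y : bool) : (x -> ~~ y) -> (~~ x -> y) -> x != y.
Proof. by case: x; case: y => //= H1 H2; [have := H1 isT | have := H2 isT]. Qed.

Lemma main_core P P' (hP : ham_path a b P) (hP' : ham_path a b P') :
  (delta b P + delta b P' <= n <= delta b P + delta b P' + 2)%N ->
  exists Q Q' : seq gT, [/\ ham_path a b Q, ham_path a b Q' & arc_disjoint Q Q'].
Proof.
rewrite (delta_formula hP) (delta_formula hP') (n_km hP) => /andP[c1 c2].
have bl := beta_le P; have bl' := beta_le P'.
have pl := pT_le P; have pl' := pT_le P'.
have k0 := k_gt0; have m1 := m_gt1.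
move: c1 c2 bl bl' pl pl'.
set B := beta P; set B' := beta P'; set p := pT P; set p' := pT P' => c1 c2 bl bl' pl pl'.
have hB : (B + B' = k \/ B + B' = k.-1 \/ (B + B' = k.-2 /\ 2 <= k))%N by nia.
have arS : forall r, (r < m)%N -> (forall s, (0 < s < m)%N -> (r + s < m)%N -> (r + s <= p)%N != (s <= p')%N) ->
    (forall s, (0 < s < m)%N -> (m < r + s)%N -> (r + s - m <= p)%N != (s <= p')%N) ->
    forall s, (0 < s < m)%N -> ((r + s) %% m != 0)%N -> (((r + s) %% m <= p)%N != (s <= p')%N).
  move=> r rm A1 A2 s ss; rewrite mod2; last lia.
  case: ifP => rsm; first by move=> _; exact: A1.
  move=> nz; apply: A2 => //.
  have rsm' : (r + s != m)%N by apply: contraNneq nz => ->; rewrite subnn.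
  lia.
case: hB => [hB|[hB|[hB k2]]].
-
  have pp : (p = 0 /\ p' = 0)%N by nia.
  case: (pickP (fun j : 'I_k.-1 => sig P j)) => [j0 sj|none].
    by apply: (caseD hP hP' (cD := false) (j0 := j0)) => //=; try lia; rewrite sj.
  have : B = 0%N by rewrite /B /beta big1 // => i _; rewrite none.
  lia.
-
  have bb : B' = (k.-1 - B)%N by lia.
  have hp : (p + p' = m.-1 \/ p + p' = m \/ p + p' = m.-2)%N by nia.
  case: hp => [hp|[hp|hp]].
  + apply: (caseS hP hP' (r := p)) => //; first lia.
    apply: arS; first lia.
    * move=> s ss rsm; apply: neq_bool => ?; lia.
    * move=> s ss rsm; apply: neq_bool => ?; lia.
  + apply: (caseS hP hP' (r := p)) => //; first lia.
    apply: arS; first lia.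
    * move=> s ss rsm; apply: neq_bool => ?; lia.
    * move=> s ss rsm; apply: neq_bool => ?; lia.
  + apply: (caseS hP hP' (r := p.+1)) => //; first lia.
    apply: arS; first lia.
    * move=> s ss rsm; apply: neq_bool => ?; lia.
    * move=> s ss rsm; apply: neq_bool => ?; lia.
-
  have pp : (p = m.-1 /\ p' = m.-1)%N by nia.
  case: (pickP (fun j : 'I_k.-1 => ~~ sig P j)) => [j0 sj|none].
    have sj' : sig P j0 = false by apply/negbTE.
    by apply: (caseD hP hP' (cD := true) (j0 := j0)) => //=; try lia; rewrite sj'.
  have : B = k.-1.
    rewrite /B /beta (eq_bigr (fun _ => 1%N)) ?sum1_card ?card_ord // => i _.
    by have := none i; case: (sig P i).
  lia.
Qed.

Theorem mainTheorem8_core :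
  (exists P P' : seq gT,
     [/\ ham_path a b P, ham_path a b P' &
       (((delta b P <= (delta a P').+1) && (delta a P' <= (delta b P).+1))%N
        \/ (delta b P + delta b P' <= #|gT| <= (delta b P + delta b P').+2)%N)]) ->
  exists Q Q' : seq gT,
    [/\ ham_path a b Q, ham_path a b Q' & arc_disjoint Q Q'].
Proof.
case=> P [P' [hP hP' hc]].
apply: (main_core hP hP').
have ds := delta_sum hP'.
have n0 := n_gt0.
move: ds n0 hc; rewrite -!/NN => ds n0 [/andP[c1 c2]|/andP[c1 c2]]; apply/andP; split; lia.
Qed.

End Main.

Theorem mainTheorem8 (gT : finGroupType) (a b : gT) :
  abelian [set: gT] ->
  a != b ->
  <<[set a; b]>> = [set: gT] ->
  (exists P P' : seq gT,
     [/\ ham_path a b P, ham_path a b P' &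
       (((delta b P <= (delta a P').+1) && (delta a P' <= (delta b P).+1))%N
        \/ (delta b P + delta b P' <= #|gT| <= (delta b P + delta b P').+2)%N)]) ->
  exists Q Q' : seq gT,
    [/\ ham_path a b Q, ham_path a b Q' & arc_disjoint Q Q'].
Proof.
move=> hab anb _.
have comm : forall x y : gT, commute x y.
  move=> x y; exact: (centsP hab x (in_setT x) y (in_setT y)).
exact: (@mainTheorem8_core gT a b comm anb).
Qed.
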